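(* Let $D=(D_1,D_2)$ with $D_1\in\mathcal{U}(n,s^p)$ (qualitative factors) and $D_2\in\mathcal{U}(n,2^q)$ (quantitative factors). Then $\mathrm{QQD}^2(D)\ge LB_2$, where $$LB_2=-\left(\frac{5s+1}{4s}\right)^p\left(\frac43\right)^q+\left(\frac{5s+1}{4s}\right)^p\left(\frac{11}{8}\right)^q+\frac{1}{n^2}\left(\frac54\right)^{p+q}\sum_{k=1}^{p+q}\left(\frac15\right)^k\sum_{k_1+k_2=k}\binom{p}{k_1}\binom{q}{k_2}r_{n,k_1,k_2,s,2}\left(1-\frac{r_{n,k_1,k_2,s,2}}{s^{k_1}2^{k_2}}\right),$$ with $r_{n,k_1,k_2,s,2}$ the remainder of $n$ modulo $s^{k_1}2^{k_2}$ (the inner sum over nonnegative integers $k_1,k_2$, with $\binom{p}{k_1}=0$ for $k_1>p$ and $\binom{q}{k_2}=0$ for $k_2>q$).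
   Context: $\mathcal{U}(n,s^p2^q)$: $n\times(p+q)$ matrices whose first $p$ columns each take every value in $\{0,\dots,s-1\}$ equally often (qualitative factors) and whose last $q$ columns each take every value in $\{0,1\}$ equally often (quantitative factors). For quantitative columns a level $x\in\{0,1\}$ is transformed to $(2x+1)/4\in[0,1]$. Let $\chi=\prod_k\chi_k$, $\chi_k=\{0,\dots,s-1\}$ for $k\le p$, $\chi_k=[0,1]$ for $k>p$, and $F$ the uniform distribution on $\chi$. Kernel: $\mathcal{K}(t,z)=\prod_k\mathcal{K}_k(t_k,z_k)$ with $\mathcal{K}_k=(3/2)^{\delta_{t_kz_k}}(5/4)^{1-\delta_{t_kz_k}}$ for $k\le p$ ($\delta$ the Kronecker delta) and $\mathcal{K}_k=\frac32-|t_k-z_k|+|t_k-z_k|^2$ for $k>p$. For $D$ with (transformed) rows $x_1,\dots,x_n$, the squared qualitative-quantitative discrepancy is $\mathrm{QQD}^2(D)=\int_{\chi^2}\mathcal{K}\,dF\,dF-\frac2n\sum_i\int_\chi\mathcal{K}(t,x_i)dF(t)+\frac1{n^2}\sum_{i,j}\mathcal{K}(x_i,x_j)$. *)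

(* Defs.v *)
From HB Require Import structures.
From mathcomp Require Import all_boot all_order all_algebra.
From mathcomp Require Import all_classical all_reals all_analysis.
Set Implicit Arguments. Unset Strict Implicit. Unset Printing Implicit Defensive.
Import Order.TTheory GRing.Theory Num.Theory.
Import numFieldNormedType.Exports.
Local Open Scope classical_set_scope.
Local Open Scope ring_scope.

Definition balanced_qual (n p s : nat) (D1 : 'M['I_s]_(n, p)) : Prop :=
  forall (j : 'I_p) (a b : 'I_s),
    #|[set i : 'I_n | D1 i j == a]| = #|[set i : 'I_n | D1 i j == b]|.

Definition balanced_quant (n q : nat) (D2 : 'M['I_2]_(n, q)) : Prop :=
  forall (j : 'I_q) (a b : 'I_2),
    #|[set i : 'I_n | D2 i j == a]| = #|[set i : 'I_n | D2 i j == b]|.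

Section QQD.
Variable R : realType.

Definition quant_level (x : 'I_2) : R := ((2 * (x : nat) + 1)%:R) / 4.

Definition Kqual (s : nat) (t z : 'I_s) : R :=
  if t == z then 3 / 2 else 5 / 4.
Definition Kquant (t z : R) : R := 3 / 2 - `|t - z| + `|t - z| ^+ 2.

(* A point of chi = {0..s-1}^p x [0,1]^q: qualitative coordinates as a finite
   function, quantitative coordinates as a sequence (coordinate k = nth 0 v k). *)
Definition Kfull (p q s : nat) (t1 : {ffun 'I_p -> 'I_s}) (t2 : seq R)
    (z1 : {ffun 'I_p -> 'I_s}) (z2 : seq R) : R :=
  (\prod_(k < p) Kqual (t1 k) (z1 k)) *
  (\prod_(k < q) Kquant (nth 0 t2 k) (nth 0 z2 k)).

(* Integral over the unit cube [0,1]^q w.r.t. Lebesgue measure, written as an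
   iterated integral (the integrands used below are continuous). *)
Fixpoint cube_int (q : nat) (f : seq R -> R) : R :=
  match q with
  | 0 => f [::]
  | q'.+1 => \int[lebesgue_measure]_(x in `[0%R, 1%R]) cube_int q' (fun v => f (x :: v))
  end.

(* Integral over chi w.r.t. the uniform distribution F
   (uniform on {0..s-1} for qualitative factors, uniform on [0,1] otherwise). *)
Definition chi_int (p q s : nat) (g : {ffun 'I_p -> 'I_s} -> seq R -> R) : R :=
  (s%:R ^+ p)^-1 * \sum_(t1 : {ffun 'I_p -> 'I_s}) cube_int q (fun t2 => g t1 t2).

Definition row_qual (n p s : nat) (D1 : 'M['I_s]_(n, p)) (i : 'I_n)
  : {ffun 'I_p -> 'I_s} := [ffun k => D1 i k].
Definition row_quant (n q : nat) (D2 : 'M['I_2]_(n, q)) (i : 'I_n) : seq R :=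
  [seq quant_level (D2 i k) | k <- enum 'I_q].

Definition QQD2 (n p q s : nat) (D1 : 'M['I_s]_(n, p)) (D2 : 'M['I_2]_(n, q)) : R :=
  @chi_int p q s (fun t1 t2 => @chi_int p q s (fun z1 z2 => @Kfull p q s t1 t2 z1 z2))
  - 2 / n%:R * \sum_(i < n)
        @chi_int p q s (fun t1 t2 => @Kfull p q s t1 t2 (row_qual D1 i) (row_quant D2 i))
  + 1 / (n%:R ^+ 2) * \sum_(i < n) \sum_(j < n)
        @Kfull p q s (row_qual D1 i) (row_quant D2 i) (row_qual D1 j) (row_quant D2 j).

Definition rem_r (n k1 k2 s : nat) : nat := n %% (s ^ k1 * 2 ^ k2).

Definition LB2 (n p q s : nat) : R :=
  - ((5 * s + 1)%:R / (4 * s)%:R) ^+ p * (4 / 3) ^+ q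
  + ((5 * s + 1)%:R / (4 * s)%:R) ^+ p * (11 / 8) ^+ q
  + 1 / (n%:R ^+ 2) * (5 / 4) ^+ (p + q) *
    \sum_(1 <= k < (p + q).+1) (1 / 5) ^+ k *
      \sum_(k1 < k.+1)
        ('C(p, k1) * 'C(q, k - k1))%:R * (rem_r n k1 (k - k1) s)%:R *
        (1 - (rem_r n k1 (k - k1) s)%:R / (s ^ k1 * 2 ^ (k - k1))%:R).

End QQD.

(* Main.v *)
Require Import Defs.
From HB Require Import structures.
From mathcomp Require Import all_boot all_order all_algebra.
From mathcomp Require Import all_classical all_reals all_analysis.
From mathcomp Require Import zify ring lra.
Set Implicit Arguments. Unset Strict Implicit. Unset Printing Implicit Defensive.
Import Order.TTheory GRing.Theory Num.Theory.
Import numFieldNormedType.Exports.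
Local Open Scope ring_scope.

Local Open Scope nat_scope.
Lemma sq_bound (c a : nat) : (2 * a + 1) * c <= c * c + a * (a + 1).
Proof.
case: (leqP c a) => h.
  have [d ->] : exists d, a = c + d by exists (a - c); lia.
  nia.
have [d ->] : exists d, c = a + 1 + d by exists (c - a - 1); lia.
nia.
Qed.

Lemma GL n (K : finType) (f : 'I_n -> K) : 0 < #|K| ->
  (n %/ #|K|) * (n %/ #|K|) * #|K| + 2 * (n %/ #|K|) * (n %% #|K|) + n %% #|K| <= \sum_(i < n) \sum_(j < n) (f i == f j).
Proof.
move=> K0; set N := #|K|; set a := n %/ N; set r := n %% N.
pose c (v : K) := #|[set i | f i == v]|.
have E1 : \sum_(i < n) \sum_(j < n) (f i == f j) = \sum_(v : K) c v * c v.
  transitivity (\sum_(i < n) c (f i)).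
    apply: eq_bigr => i _; rewrite /c -sum1_card [RHS]big_mkcond /=.
    by apply: eq_bigr => j _; rewrite inE eq_sym; case: (_ == _).
  rewrite (partition_big f predT) //=; apply: eq_bigr => v _.
  rewrite (eq_bigr (fun _ => c v)); last by move=> i /eqP ->.
  by rewrite sum_nat_const /c cardsE.
have E2 : \sum_(v : K) c v = n.
  rewrite -[n]card_ord -sum1_card (partition_big f predT) //=.
  by apply: eq_bigr => v _; rewrite /c -sum1_card; apply: eq_bigl => i; rewrite inE.
have E3 : \sum_(v : K) (2 * a + 1) * c v <= \sum_(v : K) (c v * c v + a * (a + 1)).
  by apply: leq_sum => v _; exact: sq_bound.
rewrite -big_distrr /= E2 big_split /= sum_nat_const in E3.
rewrite E1.
have En : n = a * N + r by rewrite /a /r /N; exact: divn_eq.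
change #|xpredT| with N in E3.
move: E3; set S := \sum_v c v * c v.
rewrite {1}En; nia.
Qed.


Local Open Scope ring_scope.

Lemma prod1D (I : finType) (R : comNzRingType) (F : I -> R) :
  \prod_(k : I) (1 + F k) = \sum_(S : {set I}) \prod_(k in S) F k.
Proof.
transitivity (\prod_(k : I) \sum_(b : bool) (if b then F k else 1)).
  by apply: eq_bigr => k _; rewrite big_bool /= addrC.
rewrite bigA_distr_bigA /=.
rewrite (reindex (fun S : {set I} => [ffun k => k \in S])) /=; last first.
  exists (fun f : {ffun I -> bool} => [set k | f k]) => [S _|f _].
    by apply/setP => k; rewrite inE ffunE.
  by apply/ffunP => k; rewrite ffunE inE.
apply: eq_bigr => S _; rewrite [RHS]big_mkcond /=.
by apply: eq_bigr => k _; rewrite ffunE.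
Qed.

Lemma prod_ifc (I : finType) (R : comNzRingType) (S : {set I}) (b : pred I) (c : R) :
  \prod_(k in S) (if b k then c else 0) = c ^+ #|S| * ([forall k in S, b k] : nat)%:R.
Proof.
case: (boolP [forall k in S, b k]) => H.
  rewrite mulr1 -prodr_const; apply: eq_bigr => k kS.
  by move/forall_inP: H => /(_ k kS) ->.
rewrite mulr0; move/forall_inPn: H => [k kS /negPf bk].
by rewrite (bigD1 k) //= bk mul0r.
Qed.

Definition agree n p q s (D1 : 'M['I_s]_(n, p)) (D2 : 'M['I_2]_(n, q))
  (S1 : {set 'I_p}) (S2 : {set 'I_q}) (i j : 'I_n) : bool :=
  [forall k in S1, D1 i k == D1 j k] && [forall k in S2, D2 i k == D2 j k].

Lemma agree_bound n p q s (D1 : 'M['I_s]_(n, p)) (D2 : 'M['I_2]_(n, q))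
  (S1 : {set 'I_p}) (S2 : {set 'I_q}) : (0 < s)%N ->
  (n %/ (s ^ #|S1| * 2 ^ #|S2|) * (n %/ (s ^ #|S1| * 2 ^ #|S2|)) * (s ^ #|S1| * 2 ^ #|S2|)
   + 2 * (n %/ (s ^ #|S1| * 2 ^ #|S2|)) * (n %% (s ^ #|S1| * 2 ^ #|S2|)) + n %% (s ^ #|S1| * 2 ^ #|S2|) <=
   \sum_(i < n) \sum_(j < n) agree D1 D2 S1 S2 i j)%N.
Proof.
move=> s0; set N := (s ^ #|S1| * 2 ^ #|S2|)%N.
pose key (i : 'I_n) :=
  ([ffun x : {x : 'I_p | x \in S1} => D1 i (val x)],
   [ffun x : {x : 'I_q | x \in S2} => D2 i (val x)]).
have cK : #|{: {ffun {x : 'I_p | x \in S1} -> 'I_s} * {ffun {x : 'I_q | x \in S2} -> 'I_2}}| = N.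
  by rewrite card_prod !card_ffun !card_ord !card_sig.
have EK : forall i j, (key i == key j) = agree D1 D2 S1 S2 i j.
  move=> i j; rewrite /key /agree xpair_eqE.
  congr (_ && _).
    apply/eqP/forall_inP => [H k kS|H].
      by move/ffunP: H => /(_ (exist _ k kS)); rewrite !ffunE /= => ->.
    by apply/ffunP => x; rewrite !ffunE; apply/eqP/H/(valP x).
  apply/eqP/forall_inP => [H k kS|H].
    by move/ffunP: H => /(_ (exist _ k kS)); rewrite !ffunE /= => ->.
  by apply/ffunP => x; rewrite !ffunE; apply/eqP/H/(valP x).
have := GL key; rewrite cK => H.
have N0 : (0 < N)%N by rewrite /N muln_gt0 !expn_gt0 s0.
apply: leq_trans (H N0) _.
rewrite leq_eqVlt; apply/orP; left; apply/eqP.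
apply: eq_bigr => i _; apply: eq_bigr => j _. have E := EK i j; rewrite -E; reflexivity.
Qed.

Lemma count_sets (R : comNzRingType) p q (k1 k2 : nat) (X : R) :
  \sum_(S1 : {set 'I_p}) \sum_(S2 : {set 'I_q})
     (if (#|S1| == k1) && (#|S2| == k2) then X else 0)
  = ('C(p, k1) * 'C(q, k2))%:R * X.
Proof.
transitivity (\sum_(S1 : {set 'I_p} | #|S1| == k1) \sum_(S2 : {set 'I_q} | #|S2| == k2) X).
  rewrite [RHS]big_mkcond; apply: eq_bigr => S1 _.
  case: (#|S1| == k1) => /=; last by rewrite big1.
  by rewrite [RHS]big_mkcond.
rewrite (eq_bigr (fun _ => X *+ #|[set S2 : {set 'I_q} | #|S2| == k2]|)); last first.
  by move=> S1 _; rewrite sumr_const; congr (_ *+ _); apply: eq_card => S2; rewrite inE.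
rewrite sumr_const.
have -> : #|[pred S1 : {set 'I_p} | #|S1| == k1]| = #|[set S1 : {set 'I_p} | #|S1| == k1]|.
  by apply: eq_card => S1; rewrite inE.
rewrite !card_draws !card_ord -mulrnA -mulr_natl.
by rewrite mulr1 mulr_natl mulnC.
Qed.

Lemma diag_sum (R : comNzRingType) (m a b : nat) (G : nat -> nat -> R) : (a + b <= m)%N ->
  \sum_(k < m.+1) \sum_(k1 < k.+1)
     (if (a == k1)%N && (b == (k - k1)%N) then G k1 ((k - k1)%N) else 0) = G a b.
Proof.
move=> abm.
transitivity (\sum_(k < m.+1) (if (a < k.+1)%N && (b == (k - a)%N) then G a ((k - a)%N) else 0)).
  apply: eq_bigr => k _; rewrite -big_mkcond /=.
  rewrite (eq_bigl (fun k1 : 'I_k.+1 => (b == (k - k1)%N) && (k1 == a :> nat))); last first.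
    by move=> k1 /=; rewrite andbC [a == _]eq_sym.
  by rewrite (big_ord1_cond_eq _ (fun k1 => G k1 ((k - k1)%N)) (fun k1 => b == (k - k1)%N)).
rewrite -big_mkcond /=.
rewrite (eq_bigl (fun k : 'I_m.+1 => (k == a + b :> nat)%N)); last first.
  move=> k /=; apply/idP/idP.
    by case/andP => ak /eqP ->; rewrite subnKC.
  by move/eqP => ->; rewrite ltnS leq_addr addKn eqxx.
rewrite (big_ord1_eq _ (fun k => G a ((k - a)%N))) ltnS abm.
by rewrite addKn.
Qed.

Lemma regroup (R : comNzRingType) p q (G : nat -> nat -> R) :
  \sum_(S1 : {set 'I_p}) \sum_(S2 : {set 'I_q}) G #|S1| #|S2|
  = \sum_(k < (p + q).+1) \sum_(k1 < k.+1) ('C(p, k1) * 'C(q, (k - k1)%N))%:R * G k1 ((k - k1)%N).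
Proof.
transitivity (\sum_(S1 : {set 'I_p}) \sum_(S2 : {set 'I_q})
   \sum_(k < (p + q).+1) \sum_(k1 < k.+1)
     (if (#|S1| == k1) && (#|S2| == (k - k1)%N) then G k1 ((k - k1)%N) else 0)).
  apply: eq_bigr => S1 _; apply: eq_bigr => S2 _.
  rewrite diag_sum //; apply: leq_add.
    by apply: leq_trans (max_card _) _; rewrite card_ord.
  by apply: leq_trans (max_card _) _; rewrite card_ord.
under eq_bigr => S1 _ do rewrite exchange_big.
rewrite exchange_big; apply: eq_bigr => k _.
under eq_bigr => S1 _ do rewrite exchange_big.
rewrite exchange_big; apply: eq_bigr => k1 _.
exact: count_sets.
Qed.

Lemma sum_pow_sets (R : comNzRingType) p (c : R) :
  \sum_(S : {set 'I_p}) c ^+ #|S| = (1 + c) ^+ p.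
Proof.
rewrite -[in RHS](card_ord p) -prodr_const prod1D.
by apply: eq_bigr => S _; rewrite prodr_const.
Qed.

Lemma sumI (R : numFieldType) p q s : s%:R != 0 :> R ->
  \sum_(S1 : {set 'I_p}) \sum_(S2 : {set 'I_q})
    (1/5 : R) ^+ (#|S1| + #|S2|) / (s ^ #|S1| * 2 ^ #|S2|)%:R
  = (1 + 1 / (5 * s%:R)) ^+ p * (1 + 1/10) ^+ q.
Proof.
move=> s0.
rewrite -!sum_pow_sets big_distrlr /=.
apply: eq_bigr => S1 _; apply: eq_bigr => S2 _.
rewrite exprD natrM !natrX !expr_div_n !expr1n exprMn.
have -> : (10 : R) = 5 * 2 by rewrite -natrM.
rewrite exprMn.
have h5 : (5 : R) ^+ #|S1| != 0 by rewrite expf_neq0 // pnatr_eq0.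
have h5' : (5 : R) ^+ #|S2| != 0 by rewrite expf_neq0 // pnatr_eq0.
have h2 : (2 : R) ^+ #|S2| != 0 by rewrite expf_neq0 // pnatr_eq0.
have hs : s%:R ^+ #|S1| != 0 :> R by rewrite expf_neq0.
by field; rewrite h5 h5' h2 hs.
Qed.

Local Open Scope classical_set_scope.
Section Int.
Variable R : realType.
Notation mu := (@lebesgue_measure R).

Lemma poly_Rint (P : {poly R}) (a b : R) : a <= b ->
  \int[mu]_(x in `[a, b]) (P^`()).[x] = P.[b] - P.[a].
Proof.
rewrite le_eqVlt => /predU1P[<-|ab].
  by rewrite set_itv1 Rintegral_set1 subrr.
rewrite /Rintegral (continuous_FTC2 ab (F := horner P)).
- by [].
- apply: continuous_subspaceT => x; exact: continuous_horner.
- split.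
  + by move=> x _; exact: derivable_horner.
  + apply: cvg_at_right_filter. exact: continuous_horner.
  + apply: cvg_at_left_filter. exact: continuous_horner.
- by move=> x _; rewrite -derivE.
Qed.

Lemma Kquant_cont (a : R) : continuous (fun x => Kquant a x).
Proof.
have -> : (fun x => Kquant a x) =
   horner ((3/2)%:P - 'X + 'X^2) \o (@Num.Def.normr R R) \o horner (a%:P - 'X).
  by apply/funext => x /=; rewrite /Kquant !hornerE.
move=> x; apply: continuous_comp; first exact: continuous_horner.
apply: continuous_comp; first exact: norm_continuous.
exact: continuous_horner.
Qed.

Lemma Kquant_int (a : R) : mu.-integrable `[0, 1] (EFin \o Kquant a).
Proof.
apply: continuous_compact_integrable; first exact: segment_compact.
apply: continuous_subspaceT; exact: Kquant_cont.
Qed.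

Lemma Kquant_int01 (a : R) : 0 <= a <= 1 ->
  \int[mu]_(x in `[0, 1]) Kquant a x = 4 / 3.
Proof.
move=> /andP[a0 a1].
have := @Rintegral_itvB R (Kquant a) (BLeft 0) (BRight 1) a (Kquant_int a).
rewrite !bnd_simp => /(_ a0 a1) H.
have E : \int[mu]_(x in `[0, 1]) Kquant a x =
   \int[mu]_(x in `[0, a]) Kquant a x + \int[mu]_(x in `[a, 1]) Kquant a x.
  rewrite -(@Rintegral_itv_obnd_cbnd R a (BRight 1)); first by move: H; lra.
  apply: integrableS (Kquant_int a) => //.
  by apply: subset_itvr; rewrite bnd_simp.
rewrite E.
pose P1 : {poly R} := (3/2 - a + a^+2) *: 'X + ((1 - 2*a)/2) *: 'X^2 + (1/3) *: 'X^3.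
pose P2 : {poly R} := (3/2 + a + a^+2) *: 'X - ((1 + 2*a)/2) *: 'X^2 + (1/3) *: 'X^3.

have D1 : forall x, P1^`().[x] = 3/2 - (a - x) + (a - x)^+2.
  move=> x; rewrite /P1 !derivD !derivZ derivX !derivXn !hornerE /=.
  by field.
have D2 : forall x, P2^`().[x] = 3/2 - (x - a) + (x - a)^+2.
  move=> z; rewrite /P2 !derivD !derivN !derivZ derivX !derivXn !hornerE /=.
  by field.
transitivity (\int[mu]_(x in `[0, a]) P1^`().[x] + \int[mu]_(x in `[a, 1]) P2^`().[x]).
  congr (_ + _); apply: eq_Rintegral.
    move=> y; rewrite inE /= in_itv /= => /andP[_ xa].
    by rewrite D1 /Kquant ger0_norm ?subr_ge0.
  move=> y; rewrite inE /= in_itv /= => /andP[ax _].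
  by rewrite D2 /Kquant ler0_norm ?subr_le0 // opprB.
rewrite !poly_Rint //.
rewrite /P1 /P2 !hornerE /=.
by field.
Qed.


Lemma Rint_cst (c : R) : \int[mu]_(x in `[0, 1]) c = c.
Proof.
rewrite Rintegral_cst //= lebesgue_measure_itv /= lte_fin ltr01 /= oppr0 addr0 mulr1.
by [].
Qed.

Definition in01 (v : seq R) := all (fun x => 0 <= x <= 1) v.

Lemma cube_int_ext q (f g : seq R -> R) :
  (forall v, in01 v -> f v = g v) -> cube_int q f = cube_int q g.
Proof.
elim: q f g => [|q IH] f g H /=; first exact: H.
apply: eq_Rintegral => x; rewrite inE /= in_itv /= => x01.
apply: IH => v hv; apply: H; by rewrite /in01 /= x01.
Qed.

Lemma cube_int_cst q (c : R) : cube_int q (fun _ => c) = c.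
Proof.
elim: q => [|q IH] //=.
transitivity (\int[mu]_(x in `[0, 1]) c); last exact: Rint_cst.
by apply: eq_Rintegral => x _.
Qed.

Lemma cube_prod q : forall (a : seq R) (c : R), (forall k, 0 <= nth 0 a k <= 1) ->
  cube_int q (fun v => c * \prod_(k < q) Kquant (nth 0 a k) (nth 0 v k)) = c * (4/3)^+q.
Proof.
elim: q => [|q IH] a c Ha /=; first by rewrite big_ord0 !mulr1.
transitivity (\int[mu]_(x in `[0, 1]) ((c * (4/3)^+q) * Kquant (nth 0 a 0) x)).
  apply: eq_Rintegral => x _.
  rewrite -mulrA [(4/3)^+q * _]mulrC mulrA -(IH (behead a)); last by move=> k; rewrite nth_behead.
  congr cube_int; apply/funext => v.
  rewrite big_ord_recl /= mulrA; congr (_ * _).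
  by apply: eq_bigr => k _; rewrite nth_behead.
rewrite RintegralZl //; last exact: Kquant_int.
by rewrite Kquant_int01 // exprS -mulrA [_ * (4/3)]mulrC.
Qed.

Lemma in01_nth (v : seq R) k : in01 v -> 0 <= nth 0 v k <= 1.
Proof.
elim: v k => [|x v IH] k /=; first by rewrite nth_nil lexx ler01.
by case/andP => hx hv; case: k => [|k] //=; exact: IH.
Qed.

Lemma Kquant_sym (x y : R) : Kquant x y = Kquant y x.
Proof. by rewrite /Kquant distrC. Qed.

Lemma sum_Kqual s (t : 'I_s) : \sum_(z : 'I_s) Kqual R t z = (5 * s + 1)%:R / 4.
Proof.
rewrite (bigD1 t) //= /Kqual eqxx.
rewrite (eq_bigr (fun _ => 5/4)); last by move=> z /negPf; rewrite eq_sym => ->.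
rewrite sumr_const cardC1 card_ord.
case: s t => [|s] t; first by case: t.
rewrite /= -[5 / 4 *+ _]mulr_natr natrD natrM -natr1; lra.
Qed.

Lemma sum_Kqual_r s (t : 'I_s) : \sum_(z : 'I_s) Kqual R z t = (5 * s + 1)%:R / 4.
Proof.
rewrite -(sum_Kqual t); apply: eq_bigr => z _; by rewrite /Kqual eq_sym.
Qed.

Lemma sum_prod_qual p s (t1 : {ffun 'I_p -> 'I_s}) :
  \sum_(z1 : {ffun 'I_p -> 'I_s}) \prod_(k < p) Kqual R (t1 k) (z1 k)
  = ((5 * s + 1)%:R / 4) ^+ p.
Proof.
rewrite -(bigA_distr_bigA (fun k z => Kqual R (t1 k) z)).
by rewrite (eq_bigr (fun _ => (5 * s + 1)%:R / 4)) ?prodr_const ?card_ord // => k _; exact: sum_Kqual.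
Qed.

Lemma sum_prod_qual_r p s (t1 : {ffun 'I_p -> 'I_s}) :
  \sum_(z1 : {ffun 'I_p -> 'I_s}) \prod_(k < p) Kqual R (z1 k) (t1 k)
  = ((5 * s + 1)%:R / 4) ^+ p.
Proof.
rewrite -(bigA_distr_bigA (fun k z => Kqual R z (t1 k))).
by rewrite (eq_bigr (fun _ => (5 * s + 1)%:R / 4)) ?prodr_const ?card_ord // => k _; exact: sum_Kqual_r.
Qed.

Definition VV p q s : R := ((5 * s + 1)%:R / (4 * s)%:R) ^+ p * (4 / 3) ^+ q.

Lemma VV_eq p q s : (0 < s)%N ->
  (s%:R ^+ p)^-1 * ((5 * s + 1)%:R / 4) ^+ p * (4 / 3) ^+ q = VV p q s.
Proof.
move=> s0; rewrite /VV -exprVn -exprMn natrM; congr (_ ^+ _ * _).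
have : s%:R != 0 :> R by rewrite pnatr_eq0 -lt0n.
move=> h; field; by rewrite h.
Qed.

Lemma sum_const_ffun p s (c : R) :
  \sum_(t1 : {ffun 'I_p -> 'I_s}) c = s%:R ^+ p * c.
Proof. by rewrite sumr_const card_ffun !card_ord -[c *+ _]mulr_natl natrX. Qed.

Lemma term1 p q s : (0 < s)%N ->
  @chi_int R p q s (fun t1 t2 => @chi_int R p q s (fun z1 z2 => @Kfull R p q s t1 t2 z1 z2)) = VV p q s.
Proof.
move=> s0; rewrite /chi_int.
rewrite (eq_bigr (fun _ => VV p q s)); last first.
  move=> t1 _; rewrite -[RHS](cube_int_cst q); apply: cube_int_ext => v hv.
  rewrite (eq_bigr (fun z1 : {ffun 'I_p -> 'I_s} => (\prod_(k < p) Kqual R (t1 k) (z1 k)) * (4/3)^+q)); last first.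
    move=> z1 _; rewrite /Kfull; apply: cube_prod => k; exact: in01_nth.
  by rewrite -mulr_suml sum_prod_qual mulrA VV_eq.
rewrite sum_const_ffun mulrA mulVf ?mul1r //.
by rewrite expf_neq0 // pnatr_eq0 -lt0n.
Qed.

Lemma quant_level01 (x : 'I_2) : 0 <= quant_level R x <= 1.
Proof.
case: x => [[|[|x]] hx] //; rewrite /quant_level /=; apply/andP; split; lra.
Qed.

Lemma in01_row n q (D2 : 'M['I_2]_(n, q)) i : in01 (row_quant R D2 i).
Proof.
by rewrite /in01 /row_quant all_map; apply/allP => k _ /=; exact: quant_level01.
Qed.

Lemma term2 n p q s (D1 : 'M['I_s]_(n, p)) (D2 : 'M['I_2]_(n, q)) i : (0 < s)%N ->
  @chi_int R p q s (fun t1 t2 => @Kfull R p q s t1 t2 (row_qual D1 i) (row_quant R D2 i))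
  = VV p q s.
Proof.
move=> s0; rewrite /chi_int.
rewrite (eq_bigr (fun t1 : {ffun 'I_p -> 'I_s} =>
   (\prod_(k < p) Kqual R (t1 k) (row_qual D1 i k)) * (4/3)^+q)); last first.
  move=> t1 _; rewrite /Kfull.
  rewrite -(@cube_prod q (row_quant R D2 i)); last by move=> k; exact/in01_nth/in01_row.
  congr cube_int; apply/funext => v; congr (_ * _).
  by apply: eq_bigr => k _; rewrite Kquant_sym.
by rewrite -mulr_suml sum_prod_qual_r mulrA VV_eq.
Qed.


Lemma Kqual_split s (x y : 'I_s) :
  Kqual R x y = 5/4 * (1 + (if x == y then 1/5 else 0)).
Proof. by rewrite /Kqual; case: (x == y); field. Qed.

Lemma Kquant_split (x y : 'I_2) :
  Kquant (quant_level R x) (quant_level R y) = 5/4 * (1 + (if x == y then 1/5 else 0)).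
Proof.
have E : forall z : 'I_2, quant_level R z = (2 * (z : nat) + 1)%:R / 4 by [].
rewrite /Kquant !E.
case: x => [[|[|x]] hx] //; case: y => [[|[|y]] hy] //=.
- by rewrite subrr normr0; field.
- have -> : (1%:R / 4 - 3%:R / 4) = - (1/2) :> R by field.
  by rewrite normrN ger0_norm; [field | lra].
- have -> : (3%:R / 4 - 1%:R / 4) = (1/2) :> R by field.
  by rewrite ger0_norm; [field | lra].
- by rewrite subrr normr0; field.
Qed.

Lemma nth_row_quant n q (D2 : 'M['I_2]_(n, q)) i (k : 'I_q) :
  nth 0 (row_quant R D2 i) k = quant_level R (D2 i k).
Proof.
rewrite /row_quant (nth_map k) ?size_enum_ord //.
by rewrite nth_ord_enum.
Qed.

Lemma Kfull_expand n p q s (D1 : 'M['I_s]_(n, p)) (D2 : 'M['I_2]_(n, q)) i j :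
  @Kfull R p q s (row_qual D1 i) (row_quant R D2 i) (row_qual D1 j) (row_quant R D2 j)
  = (5/4) ^+ (p + q) * \sum_(S1 : {set 'I_p}) \sum_(S2 : {set 'I_q})
      (1/5) ^+ (#|S1| + #|S2|) * (agree D1 D2 S1 S2 i j)%:R.
Proof.
rewrite /Kfull.
rewrite (eq_bigr (fun k : 'I_p => 5/4 * (1 + (if D1 i k == D1 j k then 1/5 else 0)))); last first.
  by move=> k _; rewrite /row_qual !ffunE Kqual_split.
rewrite [X in _ * X](eq_bigr (fun k : 'I_q => 5/4 * (1 + (if D2 i k == D2 j k then 1/5 else 0)))); last first.
  by move=> k _; rewrite !nth_row_quant Kquant_split.
rewrite !big_split /= !prodr_const !card_ord !prod1D.
rewrite (eq_bigr (fun S1 : {set 'I_p} => (1/5) ^+ #|S1| * ([forall k in S1, D1 i k == D1 j k] : nat)%:R)); last first.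
  by move=> S1 _; rewrite (prod_ifc S1 (fun k => D1 i k == D1 j k)).
rewrite [X in _ * (_ * X)](eq_bigr (fun S2 : {set 'I_q} => (1/5) ^+ #|S2| * ([forall k in S2, D2 i k == D2 j k] : nat)%:R)); last first.
  by move=> S2 _; rewrite (prod_ifc S2 (fun k => D2 i k == D2 j k)).
rewrite exprD mulrACA; congr (_ * _).
  by rewrite !exprMn.
rewrite big_distrlr /=; apply: eq_bigr => S1 _; apply: eq_bigr => S2 _.
rewrite /agree exprD.
by case: [forall k in S1, _]; case: [forall k in S2, _]; rewrite /= ?mulr1 ?mulr0 ?mul0r.
Qed.

Definition gfun n s a b : R :=
  (rem_r n a b s)%:R * (1 - (rem_r n a b s)%:R / (s ^ a * 2 ^ b)%:R).

Lemma per_S n p q s (D1 : 'M['I_s]_(n, p)) (D2 : 'M['I_2]_(n, q))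
  (S1 : {set 'I_p}) (S2 : {set 'I_q}) : (0 < s)%N ->
  n%:R ^+ 2 / (s ^ #|S1| * 2 ^ #|S2|)%:R + gfun n s #|S1| #|S2|
  <= \sum_(i < n) \sum_(j < n) (agree D1 D2 S1 S2 i j)%:R :> R.
Proof.
move=> s0.
have := agree_bound D1 D2 S1 S2 s0.
set N := (s ^ #|S1| * 2 ^ #|S2|)%N.
have N0 : (0 < N)%N by rewrite /N muln_gt0 !expn_gt0 s0.
have En : n = (n %/ N * N + n %% N)%N by exact: divn_eq.
rewrite -(ler_nat R) !natr_sum => H.
have -> : \sum_(i < n) \sum_(j < n) (agree D1 D2 S1 S2 i j)%:R
   = \sum_(i < n) (\sum_(j < n) agree D1 D2 S1 S2 i j)%:R :> R.
  by apply: eq_bigr => i _; rewrite natr_sum.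
apply: (le_trans _ H).
rewrite le_eqVlt; apply/orP; left; apply/eqP.
rewrite /gfun /rem_r -/N.
have NR : N%:R != 0 :> R by rewrite pnatr_eq0 -lt0n.
clearbody N.
rewrite {1}En !natrD !natrM.
set a := (n %/ N)%:R; set r := (n %% N)%:R.
rewrite -/a -/r /=.
by field.
Qed.

Lemma sum_exchange4 n p q (f : 'I_n -> 'I_n -> {set 'I_p} -> {set 'I_q} -> R) :
  \sum_(i < n) \sum_(j < n) \sum_(S1 : {set 'I_p}) \sum_(S2 : {set 'I_q}) f i j S1 S2
  = \sum_(S1 : {set 'I_p}) \sum_(S2 : {set 'I_q}) \sum_(i < n) \sum_(j < n) f i j S1 S2.
Proof.
under eq_bigr => i _ do rewrite exchange_big.
rewrite exchange_big; apply: eq_bigr => S1 _.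
under eq_bigr => i _ do rewrite exchange_big.
by rewrite exchange_big.
Qed.

Lemma main n p q s (hn : (0 < n)%N) (hs : (2 <= s)%N)
  (D1 : 'M['I_s]_(n, p)) (D2 : 'M['I_2]_(n, q)) :
  LB2 R n p q s <= QQD2 R D1 D2.
Proof.
have s0 : (0 < s)%N by apply: leq_trans hs.
have n0 : n%:R != 0 :> R by rewrite pnatr_eq0 -lt0n.
have sR : s%:R != 0 :> R by rewrite pnatr_eq0 -lt0n.
set c54 := (5/4 : R) ^+ (p + q).
set w := fun (S1 : {set 'I_p}) (S2 : {set 'I_q}) => (1/5 : R) ^+ (#|S1| + #|S2|).
have HK : \sum_(i < n) \sum_(j < n)
    @Kfull R p q s (row_qual D1 i) (row_quant R D2 i) (row_qual D1 j) (row_quant R D2 j)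
  = c54 * \sum_(S1 : {set 'I_p}) \sum_(S2 : {set 'I_q})
      w S1 S2 * \sum_(i < n) \sum_(j < n) (agree D1 D2 S1 S2 i j)%:R.
  transitivity (c54 * \sum_(i < n) \sum_(j < n) \sum_(S1 : {set 'I_p}) \sum_(S2 : {set 'I_q})
      w S1 S2 * (agree D1 D2 S1 S2 i j)%:R).
    rewrite mulr_sumr; apply: eq_bigr => i _; rewrite mulr_sumr; apply: eq_bigr => j _.
    by rewrite Kfull_expand.
  rewrite sum_exchange4; congr (_ * _); apply: eq_bigr => S1 _; apply: eq_bigr => S2 _.
  rewrite mulr_sumr; apply: eq_bigr => i _; rewrite mulr_sumr; apply: eq_bigr => j _.
  by [].
have w0 : forall S1 S2, 0 <= w S1 S2 by move=> S1 S2; rewrite /w exprn_ge0 // divr_ge0.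
pose N (S1 : {set 'I_p}) (S2 : {set 'I_q}) := (s ^ #|S1| * 2 ^ #|S2|)%N.
have Hlow : \sum_(S1 : {set 'I_p}) \sum_(S2 : {set 'I_q})
      w S1 S2 * (n%:R ^+ 2 / (N S1 S2)%:R + gfun n s #|S1| #|S2|)
   <= \sum_(S1 : {set 'I_p}) \sum_(S2 : {set 'I_q})
      w S1 S2 * \sum_(i < n) \sum_(j < n) (agree D1 D2 S1 S2 i j)%:R.
  apply: ler_sum => S1 _; apply: ler_sum => S2 _.
  by apply: ler_wpM2l => //; exact: per_S.
have Hs : \sum_(S1 : {set 'I_p}) \sum_(S2 : {set 'I_q})
      w S1 S2 * (n%:R ^+ 2 / (N S1 S2)%:R + gfun n s #|S1| #|S2|)
   = n%:R ^+ 2 * ((1 + 1 / (5 * s%:R)) ^+ p * (1 + 1/10) ^+ q)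
     + \sum_(S1 : {set 'I_p}) \sum_(S2 : {set 'I_q}) w S1 S2 * gfun n s #|S1| #|S2|.
  rewrite -(sumI p q sR) mulr_sumr -big_split /=; apply: eq_bigr => S1 _.
  rewrite mulr_sumr -big_split /=; apply: eq_bigr => S2 _.
  by rewrite /w /N; ring.
have HII : \sum_(S1 : {set 'I_p}) \sum_(S2 : {set 'I_q}) w S1 S2 * gfun n s #|S1| #|S2|
   = \sum_(k < (p + q).+1) (1 / 5) ^+ k *
      \sum_(k1 < k.+1)
        ('C(p, k1) * 'C(q, k - k1))%:R * (rem_r n k1 (k - k1) s)%:R *
        (1 - (rem_r n k1 (k - k1) s)%:R / (s ^ k1 * 2 ^ (k - k1))%:R).
  transitivity (\sum_(S1 : {set 'I_p}) \sum_(S2 : {set 'I_q})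
     (fun a b => (1/5 : R) ^+ (a + b) * gfun n s a b) #|S1| #|S2|); first by [].
  etransitivity; first exact: (regroup p q (fun a b => (1/5 : R) ^+ (a + b) * gfun n s a b)).
  apply: eq_bigr => k _; rewrite mulr_sumr; apply: eq_bigr => k1 _.
  rewrite subnKC; last by rewrite -ltnS.
  by rewrite /gfun; ring.
set PI := ((1 + 1 / (5 * s%:R)) ^+ p * (1 + 1 / 10) ^+ q : R).
set SS := \sum_(S1 : {set 'I_p}) \sum_(S2 : {set 'I_q})
      w S1 S2 * \sum_(i < n) \sum_(j < n) (agree D1 D2 S1 S2 i j)%:R.
move: Hlow; rewrite Hs HII => Hlow.
rewrite big_ord_recl big_ord1 {1}/rem_r /= expn0 muln1 modn1 mulr0 mul0r mulr0 add0r in Hlow.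
rewrite /LB2 /QQD2 term1 // HK.
rewrite [X in 2 / n%:R * X](eq_bigr (fun _ => VV p q s)); last first.
  by move=> i _; exact: term2.
rewrite sumr_const card_ord big_add1 /= big_mkord.
rewrite /bump /= in Hlow.
set SF := \sum_(i < p + q) _.
rewrite -/SF -/c54 -/SS -/PI in Hlow *.
have hB : ((5 * s + 1)%:R / (4 * s)%:R) ^+ p * (11 / 8) ^+ q = c54 * PI :> R.
  rewrite /c54 /PI exprD mulrACA -!exprMn; congr (_ ^+ _ * _ ^+ _).
    by rewrite natrD !natrM; field; rewrite sR.
  by field.
have h2 : 2 / n%:R * (VV p q s *+ n) = 2 * VV p q s.
  by rewrite -mulr_natr; field.
have hV : - ((5 * s + 1)%:R / (4 * s)%:R) ^+ p * (4 / 3) ^+ q = - VV p q s :> R.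
  by rewrite /VV mulNr.
have cpos : 0 <= 1 / n%:R ^+ 2 * c54.
  by rewrite mulr_ge0 // ?divr_ge0 // ?exprn_ge0.
have := ler_wpM2l cpos Hlow.
have E : 1 / n%:R ^+ 2 * c54 * (n%:R ^+ 2 * PI + SF) = c54 * PI + 1 / n%:R ^+ 2 * c54 * SF.
  by field.
rewrite E hV hB h2 => H.
lra.
Qed.

End Int.

Unset Implicit Arguments.
Local Close Scope classical_set_scope.

Theorem theorem5 (R : realType) (n p q s : nat) (hn : (0 < n)%N) (hs : (2 <= s)%N)
  (D1 : 'M['I_s]_(n, p)) (D2 : 'M['I_2]_(n, q)) :
  balanced_qual D1 -> balanced_quant D2 ->
  LB2 R n p q s <= QQD2 R D1 D2.
Proof.
by move=> _ _; apply: main.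
Qed.
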